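(* Fix a positive integer $N$, seed boundary labels $i,j$, and irreducible representations $r,r'$ of the symmetric group $S_N$ with characters $\chi^r,\chi^{r'}$. Let $B_{ij}$ be a set such that the distinguished vacuum element $v$ belongs to $B_{ij}$ if and only if $i=j$, and belongs to it exactly once. For $k\ge1$ put $p_k=\sum_{s\in B_{ij}}x_s^k$, and for $g\in S_N$ let $m_k(g)$ be the number of $k$-cycles in the disjoint cycle decomposition of $g$. Define \[ \mathcal{Z}^{(N)r,r'}_{ij}=\frac{1}{N!}\sum_{g\in S_N}\chi^r(g)\,\chi^{r'}(g)\prod_{k=1}^N p_k^{\,m_k(g)} . \] Then $\mathcal{Z}^{(N)r,r'}_{ij}$ is a good partition function: every coefficient of every monomial $\prod_s x_s^{M_s}$ in it is an integer, and the coefficient of the vacuum monomial $x_v^N$ equals $1$ if $i=j$ and $r=r'$, and $0$ otherwise.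
   Context: Model of the seed open-string partition functions. For seed boundary labels $i,j$, the open-string partition function $Z_{ij}(\tau)$ is encoded as the formal sum $Z_{ij}=\sum_{s\in B_{ij}}x_s$ in commuting indeterminates $x_s$. The set $B_{ij}$, a basis of seed open-string states, may be infinite; all expressions are formal power series in the $x_s$. Replacing $\tau$ by $k\tau$ corresponds to replacing each $x_s$ by $x_s^k$, so $p_k=\sum_{s\in B_{ij}}x_s^k$ represents $Z_{ij}(k\tau)$. A state of the orbifold open-string channel corresponds to a monomial $\prod_s x_s^{M_s}$ with $\sum_s M_s=N$. Its multiplicity is the coefficient of that monomial. Characters of $S_N$ are real-valued class functions. *)

(* Defs.v *)
From HB Require Import structures.
From mathcomp Require Import all_boot all_order all_algebra all_fingroup all_field all_character.
From mathcomp Require Import mpoly.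
Set Implicit Arguments. Unset Strict Implicit. Unset Printing Implicit Defensive.
Import Order.TTheory GRing.Theory Num.Theory.
Local Open Scope ring_scope.

Definition cycle_count (N : nat) (g : 'S_N) (k : nat) : nat :=
  #|[set c in porbits g | #|c| == k]|.

(* p_k restricted to a finite family of n states, variable a <-> a-th state *)
Definition power_sum (n k : nat) : {mpoly algC[n]} := \sum_(a < n) 'X_a ^+ k.

Definition Zorb (N n : nat) (r r' : Iirr [set: 'S_N]%G) : {mpoly algC[n]} :=
  (N`!%:R)^-1 *: \sum_(g : 'S_N)
     ('chi_r g * 'chi_r' g) *: \prod_(1 <= k < N.+1) power_sum n k ^+ cycle_count g k.

(* exponent vector of the monomial prod_{s in M} x_s (M a multiset, given as a
   list) w.r.t. the list of states S *)
Definition monomial_of (T : eqType) (S M : seq T) : 'X_{1..size S} :=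
  [multinom count_mem (tnth (in_tuple S) a) M | a < size S].

(* Coefficient of the monomial prod_{s in M} x_s in Z^{(N) r,r'}_{ij}, where the
   state basis is B.  It is computed in the truncation to the finitely many
   variables occurring in M; it is 0 if M uses a variable not in B. *)
Definition orbCoef (T : eqType) (B : pred T) (N : nat) (r r' : Iirr [set: 'S_N]%G)
    (M : seq T) : algC :=
  if all B M then (Zorb (size (undup M)) r r')@_(monomial_of (undup M) M) else 0.

(* Main.v *)
Require Import Defs.
From HB Require Import structures.
From mathcomp Require Import all_boot all_order all_algebra all_fingroup all_field all_character.
From mathcomp Require Import mpoly.
Set Implicit Arguments. Unset Strict Implicit. Unset Printing Implicit Defensive.
Import Order.TTheory GRing.Theory Num.Theory.
Local Open Scope ring_scope.
Section InvConj.
Variable T : finType.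
Implicit Types s u : {perm T}.

Lemma powV_eq u a b (x : T) : (u ^+ a)%g x = (u ^+ b)%g x -> (u^-1 ^+ a)%g x = (u^-1 ^+ b)%g x.
Proof.
move=> E.
have H : (u^-1 ^+ b)%g ((u ^+ b)%g x) = x by rewrite expgVn permK.
rewrite -{1}H -E -!permM; congr (fun_of_perm _ x).
rewrite !expgVn; have C : commute (u ^+ a)%g ((u ^+ b)^-1)%g.
  by apply: commuteV; apply: commuteX2.
by rewrite mulgA C -mulgA mulgV mulg1.
Qed.

Variable s : {perm T}.
Definition rep (w : T) : T := odflt w [pick y in porbit s w].

Lemma rep_in w : rep w \in porbit s w.
Proof. by rewrite /rep; case: pickP => //= _; rewrite porbit_id. Qed.

Lemma rep_s w : rep (s w) = rep w.
Proof.
rewrite /rep; have := porbit_perm s 1 w; rewrite expg1 => ->.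
by case: pickP => //= /(_ w); rewrite porbit_id.
Qed.

Lemma exk w : exists k, (s ^+ k)%g (rep w) == w.
Proof.
have : w \in porbit s (rep w) by rewrite porbit_sym rep_in.
by case/porbitP => k E; exists k; rewrite -E.
Qed.

Definition kk w := xchoose (exk w).
Lemma kkP w : (s ^+ kk w)%g (rep w) = w.
Proof. exact/eqP/(xchooseP (exk w)). Qed.

Definition t0 w := (s^-1 ^+ kk w)%g (rep w).

Lemma t0_s w : t0 (s w) = (s^-1)%g (t0 w).
Proof.
rewrite /t0 rep_s.
have : (s ^+ kk (s w))%g (rep w) = (s ^+ (kk w).+1)%g (rep w).
  by rewrite -{1}rep_s kkP expgSr permM kkP.
by move/powV_eq => ->; rewrite expgSr permM.
Qed.

Lemma t0_porbit w : porbit s (t0 w) = porbit s w.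
Proof.
rewrite /t0 -porbitV porbit_perm porbitV.
by apply/eqP; rewrite eq_porbit_mem rep_in.
Qed.

Lemma t0_inj : injective t0.
Proof.
move=> w1 w2 E.
have R : rep w1 = rep w2.
  have P : porbit s w1 = porbit s w2 by rewrite -t0_porbit E t0_porbit.
  by rewrite /rep P; case: pickP => //= /(_ w2); rewrite porbit_id.
move: E; rewrite /t0 R => /powV_eq; rewrite invgK -R !kkP.
by move=> ->; rewrite R kkP.
Qed.

Lemma conj_inv : exists t : {perm T}, (s ^ t)%g = s^-1%g.
Proof.
exists (perm t0_inj); apply/permP => z.
rewrite conjgE !permM; set w := ((perm t0_inj)^-1)%g z.
have -> : z = perm t0_inj w by rewrite /w permKV.
have PE y : perm t0_inj y = t0 y by rewrite permE.
by rewrite !PE t0_s.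
Qed.
End InvConj.
Lemma natr_if (b : bool) : (b%:R : algC) = if b then 1 else 0.
Proof. by case: b. Qed.

Lemma perm_char (gT : finGroupType) (G : {group gT}) (X : finType) (act : X -> gT -> X) :
  (forall x, act x 1%g = x) -> (forall x g h, act x (g * h)%g = act (act x g) h) ->
  exists2 pi : 'CF(G), pi \is a character &
    forall g, g \in G -> pi g = (#|[set x | act x g == x]|)%:R.
Proof.
move=> act1 actM.
pose rM (g : gT) : 'M[algC]_#|X| :=
  \matrix_(i, j) ((act (enum_val i) g == enum_val j)%:R).
have rP : mx_repr G rM.
  split.
    by apply/matrixP => i j; rewrite !mxE act1 (inj_eq enum_val_inj).
  move=> g h _ _; apply/matrixP => i k; rewrite !mxE.
  rewrite (bigD1 (enum_rank (act (enum_val i) g))) //= big1 ?addr0.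
    by rewrite !mxE enum_rankK eqxx mul1r actM.
  move=> j nej; rewrite !mxE; case: eqP => [E|]; last by rewrite mul0r.
  by move: nej; rewrite E enum_valK eqxx.
exists (cfRepr (MxRepresentation rP)); first exact: cfRepr_char.
move=> g Gg; rewrite cfunE Gg mulr1n /mxtrace /=.
under eq_bigr do rewrite mxE.
rewrite -(big_enum_val (fun x => (act x g == x)%:R)) /=.
under eq_bigr do rewrite natr_if.
by rewrite -big_mkcond sumr_const cardsE.
Qed.

Lemma Sn_irr_real N (r : Iirr [set: 'S_N]%G) : ('chi_r)^*%CF = 'chi_r.
Proof.
apply/cfunP => g; rewrite cfConjCE -char_inv ?irr_char //.
have [t Ht] := conj_inv g.
by rewrite -Ht cfunJ ?inE.
Qed.

Lemma cycle_count0 N (g : 'S_N) : cycle_count g 0 = 0%N.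
Proof.
apply/eqP; rewrite cards_eq0; apply/eqP/setP => c; rewrite !inE.
apply/negP => /andP[/imsetP[x _ ->]].
by rewrite (negPf (card_porbit_neq0 _ _)).
Qed.

Lemma L1 N n (g : 'S_N) :
  \prod_(1 <= k < N.+1) power_sum n k ^+ cycle_count g k
  = \prod_(c in porbits g) power_sum n #|c|.
Proof.
rewrite (partition_big (fun c : {set 'I_N} => inord #|c| : 'I_N.+1) predT) //=.
transitivity (\prod_(0 <= k < N.+1) power_sum n k ^+ cycle_count g k).
  by rewrite [RHS]big_ltn // cycle_count0 expr0 mul1r.
rewrite big_mkord; apply: eq_bigr => k _.
have cle c : c \in porbits g -> (#|c| < N.+1)%N.
  by move=> _; rewrite ltnS; apply: leq_trans (max_card _) _; rewrite card_ord.
rewrite (eq_bigr (fun _ => power_sum n k)); last first.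
  by move=> c /andP[/cle cN /eqP <-]; rewrite inordK.
rewrite prodr_const; congr (_ ^+ _).
apply: eq_card => c.
transitivity ((c \in porbits g) && (#|c| == k)); first by rewrite inE.
transitivity ((c \in porbits g) && (inord #|c| == k)); last by [].
case Pc: (c \in porbits g) => //=.
by rewrite -val_eqE /= inordK ?cle.
Qed.

Definition fixedc N n (g : 'S_N) (phi : {ffun 'I_N -> 'I_n}) : bool :=
  [forall x, phi (g x) == phi x].
Definition mon N n (phi : {ffun 'I_N -> 'I_n}) : 'X_{1..n} :=
  (\sum_(x < N) U_(phi x))%MM.

Lemma fixed_orbit N n (g : 'S_N) (phi : {ffun 'I_N -> 'I_n}) :
  fixedc g phi -> forall x y, y \in porbit g x -> phi y = phi x.
Proof.
move=> H x y /porbitP[i ->]; elim: i => [|i IH]; first by rewrite expg0 perm1.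
by rewrite expgSr permM (eqP (forallP H _)) IH.
Qed.

Lemma porbit_g N (g : 'S_N) x : porbit g (g x) = porbit g x.
Proof. by have := porbit_perm g 1 x; rewrite expg1. Qed.

Lemma L2 N n (j0 : 'I_n) (g : 'S_N) :
  \prod_(c in porbits g) power_sum n #|c|
  = \sum_(phi | fixedc g phi) 'X_[mon phi].
Proof.
rewrite /power_sum (big_distr_big j0) /=.
pose h (f : {ffun {set 'I_N} -> 'I_n}) : {ffun 'I_N -> 'I_n} :=
  [ffun x => f (porbit g x)].
pose h' (phi : {ffun 'I_N -> 'I_n}) : {ffun {set 'I_N} -> 'I_n} :=
  [ffun c => if c \in porbits g then
     (if [pick x in c] is Some x then phi x else j0) else j0].
have inP x : porbit g x \in porbits g by apply: imset_f.
rewrite (reindex_onto h h') /=; last first.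
  move=> phi Fphi; apply/ffunP => x; rewrite !ffunE inP.
  case: pickP => [y Hy | /(_ x)]; last by rewrite porbit_id.
  by rewrite (fixed_orbit Fphi Hy).
apply: eq_big.
  move=> f.
  have -> : fixedc g (h f) by apply/forallP => x; rewrite !ffunE porbit_g.
  rewrite /=; apply/idP/eqP.
    case/pffun_onP => /supportP S _; apply/ffunP => c; rewrite !ffunE.
    case: ifP => Pc; last by rewrite S ?Pc.
    case/imsetP: Pc => z _ ->.
    case: pickP => [y Hy | /(_ z)]; last by rewrite porbit_id.
    by rewrite ffunE; congr (f _); apply/eqP; rewrite eq_porbit_mem.
  move=> E; apply/pffun_onP; split; last by move=> ? ?.
  apply/supportP => c Pc; rewrite -E ffunE.
  by move/negPf: Pc => ->.
move=> f _.
rewrite /mon -mprodXE.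
rewrite (partition_big (porbit g) (mem (porbits g))) //=.
apply: eq_bigr => c Pc.
rewrite (eq_bigr (fun _ => 'X_(f c))); last by move=> x /eqP <-; rewrite ffunE.
rewrite prodr_const; congr (_ ^+ _).
case/imsetP: Pc => z _ ->.
apply: eq_card => x; rewrite -eq_porbit_mem; by [].
Qed.



Lemma L3 N n (g : 'S_N) (m : 'X_{1..n}) : (0 < N)%N ->
  (\prod_(1 <= k < N.+1) power_sum n k ^+ cycle_count g k)@_m
  = (#|[set phi | fixedc g phi & mon phi == m]|)%:R.
Proof.
move=> N0; rewrite L1.
case: n m => [|n] m.
  pose x0 : 'I_N := Ordinal N0.
  rewrite (bigD1 (porbit g x0)) ?imset_f //= /power_sum big_ord0 mul0r mcoeff0.
  rewrite (_ : [set _ | _] = set0) ?cards0 //; apply/setP => phi.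
  by case: (phi x0).
rewrite (L2 ord0) raddf_sum /=.
under eq_bigr do rewrite mcoeffX natr_if.
rewrite -big_mkcondr sumr_const; congr (_%:R).
by apply: eq_card => phi; rewrite inE.
Qed.


Lemma Zcoef N n (r r' : Iirr [set: 'S_N]%G) (m : 'X_{1..n}) : (0 < N)%N ->
  (Zorb n r r')@_m = (N`!%:R)^-1 * \sum_(g : 'S_N)
     ('chi_r g * 'chi_r' g) * (#|[set phi | fixedc g phi & mon phi == m]|)%:R.
Proof.
move=> N0; rewrite /Zorb linearZ /= raddf_sum; congr (_ * _).
by apply: eq_bigr => g _; rewrite /= mcoeffZ L3.
Qed.

Definition act0 N n (phi : {ffun 'I_N -> 'I_n}) (g : 'S_N) : {ffun 'I_N -> 'I_n} :=
  [ffun y => phi ((g^-1)%g y)].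

Lemma mon_act0 N n (phi : {ffun 'I_N -> 'I_n}) g : mon (act0 phi g) = mon phi.
Proof.
rewrite /mon [RHS](reindex_inj (@perm_inj _ (g^-1)%g)).
by apply: eq_bigr => x _; rewrite ffunE.
Qed.

Lemma fix_char N n (m : 'X_{1..n}) :
  exists2 pi : 'CF([set: 'S_N]%G), pi \is a character &
    forall g, pi g = (#|[set phi | fixedc g phi & mon phi == m]|)%:R.
Proof.
pose X := {phi : {ffun 'I_N -> 'I_n} | mon phi == m}.
pose act (x : X) (g : 'S_N) : X := insubd x (act0 (val x) g).
have actv x g : val (act x g) = act0 (val x) g.
  by rewrite /act insubdK // -topredE /= mon_act0 (valP x).
have act1 x : act x 1%g = x.
  by apply: val_inj; rewrite actv; apply/ffunP => y; rewrite ffunE invg1 perm1.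
have actM x g h : act x (g * h)%g = act (act x g) h.
  by apply: val_inj; rewrite !actv; apply/ffunP => y; rewrite !ffunE invMg permM.
have [pi Cpi Epi] := perm_char [set: 'S_N]%G act1 actM.
exists pi => // g; rewrite Epi ?inE //; congr (_%:R).
rewrite -(card_imset _ val_inj); apply: eq_card => phi; rewrite [in RHS]inE.
apply/imsetP/andP.
  case=> x; rewrite inE => /eqP Hx ->; split; last exact: (valP x).
  apply/forallP => y; move/(congr1 val): Hx; rewrite actv => /ffunP/(_ (g y)).
  by rewrite ffunE permK => ->.
case=> F Mm; exists (Sub phi Mm) => //; rewrite inE; apply/eqP/val_inj.
rewrite actv /=; apply/ffunP => y; rewrite ffunE.
by rewrite -{2}(permKV g y) (eqP (forallP F _)).
Qed.

Lemma Zcoef_nat N n (r r' : Iirr [set: 'S_N]%G) (m : 'X_{1..n}) : (0 < N)%N ->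
  (Zorb n r r')@_m \in Num.nat.
Proof.
move=> N0; have [pi Cpi Epi] := fix_char N m.
have -> : (Zorb n r r')@_m = '['chi_r * pi, ('chi_r')^*%CF].
  rewrite Zcoef // cfdotE cardsT card_Sn; congr (_ * _).
  apply: eq_big => [g|g _]; first by rewrite inE.
  by rewrite !cfunE Epi conjCK mulrAC.
apply: Cnat_cfdot_char; first by rewrite rpredM ?irr_char.
by rewrite cfConjC_char irr_char.
Qed.

Lemma card_vac N (g : 'S_N) (m : 'X_{1..1}) : (forall a, m a = N) ->
  #|[set phi : {ffun 'I_N -> 'I_1} | fixedc g phi & mon phi == m]| = 1%N.
Proof.
move=> Hm.
rewrite (_ : [set _ | _] = setT) ?cardsT ?card_ffun ?card_ord ?exp1n //.
apply/setP => phi; rewrite !inE; apply/andP; split.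
  by apply/forallP => x; rewrite [phi (g x)]ord1 [phi x]ord1.
apply/eqP/mnmP => a; rewrite Hm /mon mnm_sumE.
rewrite (eq_bigr (fun _ => 1%N)); last by move=> x _; rewrite mnm1E [phi x]ord1 [a]ord1.
by rewrite sum1_card card_ord.
Qed.

Lemma Zcoef_vac N n (r r' : Iirr [set: 'S_N]%G) (m : 'X_{1..n}) : (0 < N)%N ->
  n = 1%N -> (forall a, m a = N) -> (Zorb n r r')@_m = (r == r')%:R.
Proof.
move=> N0 En Hm; subst n; rewrite Zcoef //.
under eq_bigr do rewrite card_vac // mulr1.
rewrite -cfdot_irr cfdotE cardsT card_Sn; congr (_ * _).
apply: eq_big => [g|g _]; first by rewrite inE.
by rewrite -cfConjCE Sn_irr_real.
Qed.

Lemma undup_nseq (T : eqType) (v : T) k : undup (nseq k.+1 v) = [:: v].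
Proof.
elim: k => [|k IH] //.
have H : v \in nseq k.+1 v by rewrite mem_nseq eqxx.
change (undup (v :: nseq k.+1 v) = [:: v]).
have E : undup (v :: nseq k.+1 v) = if v \in nseq k.+1 v then undup (nseq k.+1 v)
   else v :: undup (nseq k.+1 v) by [].
by rewrite E H IH.
Qed.

Theorem mainTheorem2 (L T : eqType) (N : nat) (i j : L)
    (r r' : Iirr [set: 'S_N]%G) (B : pred T) (v : T) :
  (0 < N)%N ->
  (v \in B <-> i = j) ->
  (forall M : seq T, orbCoef B r r' M \is a Num.int) /\
  orbCoef B r r' (nseq N v) = (if (i == j) && (r == r') then 1 else 0).
Proof.
move=> N0 HB; split.
  move=> M; rewrite /orbCoef; case: ifP => _; last by rewrite rpred0.
  by apply: intr_nat; apply: Zcoef_nat.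
case: N N0 r r' => [//|N'] _ r r'.
case: (boolP (i == j)) => [/eqP Eij | Nij]; last first.
  rewrite /= /orbCoef.
  case: ifP => // H; move: H => /= /andP[vB _].
  by case/negP: Nij; apply/eqP/HB.
have vB : v \in B by apply/HB.
rewrite /orbCoef (_ : all B _ = true); last by rewrite all_nseq; apply/orP; right.
rewrite Zcoef_vac //.
- by case: (r == r').
- by rewrite undup_nseq.
move=> a; rewrite mnmE.
set t := tnth _ a.
have : t \in undup (nseq N'.+1 v) by apply: mem_tnth.
rewrite mem_undup mem_nseq => /andP[_ /eqP E].
rewrite -E count_nseq.
have -> : pred1 t t = true by apply: eqxx.
by rewrite mul1n.
Qed.
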